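(* Let $\phi,\tilde\phi:\mathbb{R}\to(0,1)$ be differentiable, strictly increasing, surjective functions whose derivatives are each monotone on $(z_0,\infty)$ for some $z_0\ge 0$. Suppose $\phi$ has a higher order of saturation than $\tilde\phi$, i.e. (i) $\lim_{z\to\infty}\frac{1-\phi(z)}{1-\tilde\phi(az)}=0$ for every $a>0$, and (ii) the function $z\mapsto\tilde\phi^{-1}(\phi(z))$ is convex on $(z_1,\infty)$ for some $z_1\in\mathbb R$. Define $g_\phi(f):=\phi'(\phi^{-1}(f))$ and $g_{\tilde\phi}(f):=\tilde\phi'(\tilde\phi^{-1}(f))$ for $f\in(0,1)$. Then $g_\phi(f)/g_{\tilde\phi}(f)\to\infty$ as $f\to 1^-$.
   Context: $\phi^{-1},\tilde\phi^{-1}:(0,1)\to\mathbb R$ denote the inverse functions. The quantity $g_\phi(f)$ is the derivative of the gate function expressed as a function of its output value $f$; under gradient flow on a parameter $z$ with loss $L$, the output $f=\phi(z)$ evolves by $df/d\tau=-g_\phi(f)^2\,\partial L/\partial f$. *)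

(* Defs.v *)
From Stdlib Require Import Reals.
From Coquelicot Require Import Coquelicot.
Open Scope R_scope.

Definition monotone_on_ray (f : R -> R) (a : R) : Prop :=
  (forall x y, a < x -> x <= y -> f x <= f y) \/
  (forall x y, a < x -> x <= y -> f y <= f x).

Definition convex_on_ray (h : R -> R) (a : R) : Prop :=
  forall x y t, a < x -> a < y -> 0 <= t <= 1 ->
    h (t * x + (1 - t) * y) <= t * h x + (1 - t) * h y.

Definition is_inv_on01 (phi phiinv : R -> R) : Prop :=
  forall f, 0 < f < 1 -> phi (phiinv f) = f.

Definition gate_g (phi phiinv : R -> R) (f : R) : R := Derive phi (phiinv f).

(* Main.v *)
Require Import Defs.
From Stdlib Require Import Reals Lra Classical.
From Coquelicot Require Import Coquelicot.
Open Scope R_scope.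

Lemma mvt (f : R -> R) a b (Hd : forall x, ex_derive f x) (Hab : a < b) :
  exists c, a <= c <= b /\ f b - f a = Derive f c * (b - a).
Proof.
  destruct (MVT_gen f a b (Derive f)) as [c [Hc He]].
  - intros; apply Derive_correct; auto.
  - intros; apply continuity_pt_filterlim; apply (ex_derive_continuous (V:=R_NormedModule)); auto.
  - rewrite Rmin_left in Hc by lra. rewrite Rmax_right in Hc by lra. eauto.
Qed.

Lemma deriv_noninc (g : R -> R) z0
  (rng : forall z, 0 < g z < 1) (der : forall z, ex_derive g z)
  (inc : forall x y, x < y -> g x < g y)
  (mono : monotone_on_ray (Derive g) z0) :
  forall x y, z0 < x -> x <= y -> Derive g y <= Derive g x.
Proof.
  destruct mono as [Hnd|Hni]; [|exact Hni]. exfalso.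
  destruct (mvt g (z0+1) (z0+2)) as [c [Hc He]]; auto; try lra.
  assert (Hp := inc (z0+1) (z0+2) ltac:(lra)).
  set (d := Derive g c) in *.
  assert (Hd : 0 < d) by nra.
  destruct (mvt g c (c + 2/d)) as [e [He2 Hee]]; auto.
  { assert (0 < 2/d) by (apply Rdiv_lt_0_compat; lra). lra. }
  assert (Hde : d <= Derive g e) by (apply Hnd; lra).
  assert (Hq : 0 < 2/d) by (apply Rdiv_lt_0_compat; lra).
  assert (Derive g e * (2/d) >= d * (2/d)) by (apply Rmult_ge_compat_r; lra).
  assert (d * (2/d) = 2) by (field; lra).
  replace (c + 2/d - c) with (2/d) in Hee by ring.
  pose proof (rng (c + 2/d)). pose proof (rng c). lra.
Qed.

Lemma deriv_pos (g : R -> R) z0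
  (rng : forall z, 0 < g z < 1) (der : forall z, ex_derive g z)
  (inc : forall x y, x < y -> g x < g y)
  (mono : monotone_on_ray (Derive g) z0) :
  forall x, z0 < x -> 0 < Derive g x.
Proof.
  intros x Hx. apply Rnot_le_lt; intro Hle.
  destruct (mvt g x (x+1)) as [c [Hc He]]; auto; try lra.
  assert (Derive g c <= Derive g x) by (apply (deriv_noninc g z0); auto; lra).
  assert (Hp := inc x (x+1) ltac:(lra)). nra.
Qed.

Theorem theorem1
  (phi phit phiinv phitinv : R -> R) (z0 z1 : R)
  (* phi, phit : R -> (0,1), differentiable, strictly increasing, surjective *)
  (Hphi_rng : forall z, 0 < phi z < 1)
  (Hphit_rng : forall z, 0 < phit z < 1)
  (Hphi_der : forall z, ex_derive phi z)
  (Hphit_der : forall z, ex_derive phit z)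
  (Hphi_inc : forall x y, x < y -> phi x < phi y)
  (Hphit_inc : forall x y, x < y -> phit x < phit y)
  (Hphi_inv : is_inv_on01 phi phiinv)
  (Hphit_inv : is_inv_on01 phit phitinv)
  (* derivatives monotone on (z0, +oo), z0 >= 0 *)
  (Hz0 : 0 <= z0)
  (Hphi_mono : monotone_on_ray (Derive phi) z0)
  (Hphit_mono : monotone_on_ray (Derive phit) z0)
  (* (i) *)
  (Hsat : forall a, 0 < a ->
     is_lim (fun z => (1 - phi z) / (1 - phit (a * z))) p_infty 0)
  (* (ii) *)
  (Hconv : convex_on_ray (fun z => phitinv (phi z)) z1) :
  filterlim (fun f => gate_g phi phiinv f / gate_g phit phitinv f)
    (at_left 1) (Rbar_locally p_infty).
Proof.
  unfold is_inv_on01 in *.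
  set (h := fun z => phitinv (phi z)) in *.
  assert (Hid : forall z, phit (h z) = phi z).
  { intro z. unfold h. apply Hphit_inv. apply Hphi_rng. }
  assert (Hphit_le : forall x y, x <= y -> phit x <= phit y).
  { intros x y H. destruct (Rle_lt_or_eq_dec x y H) as [H'|H'].
    - left; auto.
    - subst; lra. }
  assert (Hphi_le : forall x y, x <= y -> phi x <= phi y).
  { intros x y H. destruct (Rle_lt_or_eq_dec x y H) as [H'|H'].
    - left; auto.
    - subst; lra. }
  assert (Hh_inc : forall x y, x < y -> h x < h y).
  { intros x y H. apply Rnot_le_lt; intro H'.
    pose proof (Hphit_le _ _ H'). rewrite !Hid in H0.
    pose proof (Hphi_inc _ _ H). lra. }
  assert (Hh_le : forall x y, x <= y -> h x <= h y).
  { intros x y H. destruct (Rle_lt_or_eq_dec x y H) as [H'|H'].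
    - left; auto.
    - subst; lra. }
  assert (Hphit_inj : forall x y, phit x = phit y -> x = y).
  { intros x y H. destruct (Rtotal_order x y) as [H'|[H'|H']]; auto.
    - pose proof (Hphit_inc _ _ H'); lra.
    - pose proof (Hphit_inc _ _ H'); lra. }
  assert (Hc : exists c, z1 < c /\ z0 < h c).
  { set (u := phit (z0+1)).
    assert (Hu : 0 < u < 1) by apply Hphit_rng.
    set (c0 := phiinv u).
    assert (Hc0 : h c0 = z0 + 1).
    { unfold h, c0. rewrite Hphi_inv by auto. apply Hphit_inj.
      rewrite Hphit_inv by auto. reflexivity. }
    exists (Rmax c0 (z1 + 1)). split.
    - pose proof (Rmax_r c0 (z1+1)); lra.
    - pose proof (Hh_le c0 (Rmax c0 (z1+1)) (Rmax_l _ _)). lra. }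
  destruct Hc as [c [Hcz1 Hcz0]].
  set (s := fun z => (h z - h c) / (z - c)).
  assert (Hchord : forall x z, c < x < z -> h x <= h c + s z * (x - c)).
  { intros x z [H1 H2]. set (t := (z - x) / (z - c)).
    assert (Ht : 0 <= t <= 1).
    { unfold t. split.
      - apply Rdiv_le_0_compat; lra.
      - apply (Rmult_le_reg_r (z - c)); [lra|].
        replace ((z - x) / (z - c) * (z - c)) with (z - x) by (field; lra). lra. }
    pose proof (Hconv c z t ltac:(lra) ltac:(lra) Ht) as Hcv. simpl in Hcv.
    replace (t * c + (1 - t) * z) with x in Hcv by (unfold t; field; lra).
    fold (h x) (h c) (h z) in Hcv.
    replace (h c + s z * (x - c)) with (t * h c + (1 - t) * h z)
      by (unfold t, s; field; lra).
    exact Hcv. }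
  assert (HA : forall x z, c < x < z -> s x <= s z).
  { intros x z Hx. pose proof (Hchord x z Hx).
    unfold s at 1. apply (Rmult_le_reg_r (x - c)); [lra|].
    replace ((h x - h c) / (x - c) * (x - c)) with (h x - h c) by (field; lra).
    lra. }
  assert (HB : forall x z, c < x < z -> s z * (z - x) <= h z - h x).
  { intros x z Hx. pose proof (Hchord x z Hx).
    assert (h z - h c = s z * (z - c)) by (unfold s; field; lra). nra. }
  assert (Hw_pos : forall w, z0 < w -> 0 < Derive phit w)
    by (apply (deriv_pos phit z0); auto).
  assert (Hw_ni : forall x y, z0 < x -> x <= y -> Derive phit y <= Derive phit x)
    by (apply (deriv_noninc phit z0); auto).
  assert (Hmain : forall M, 0 < M -> exists Z, forall z, Z < z ->
            M <= Derive phi z / Derive phit (h z)).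
  { intros M HM.
    assert (HZ : exists Z, c < Z /\ M <= s Z).
    { apply NNPP; intro Hn.
      assert (Hall : forall z, c < z -> s z < M).
      { intros z Hz. apply Rnot_le_lt; intro H. apply Hn; eauto. }
      pose proof (Hsat (M+1) ltac:(lra)) as Hl.
      apply is_lim_spec in Hl. specialize (Hl (mkposreal (/2) ltac:(lra))).
      destruct Hl as [N HN]. simpl in HN.
      set (z := Rmax (Rmax N c) (Rabs (h c - M * c)) + 1).
      assert (Hz1 : N < z /\ c < z /\ Rabs (h c - M * c) < z).
      { unfold z. pose proof (Rmax_l (Rmax N c) (Rabs (h c - M * c))).
        pose proof (Rmax_r (Rmax N c) (Rabs (h c - M * c))).
        pose proof (Rmax_l N c). pose proof (Rmax_r N c). lra. }
      destruct Hz1 as [HzN [Hzc Hzabs]].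
      specialize (HN z HzN).
      assert (Hs := Hall z Hzc).
      assert (Hhz : h z - h c = s z * (z - c)) by (unfold s; field; lra).
      assert (Hle : h c - M * c <= z) by (pose proof (Rle_abs (h c - M * c)); lra).
      assert (Hlt : h z < (M + 1) * z) by nra.
      pose proof (Hphit_inc _ _ Hlt) as Hp. rewrite Hid in Hp.
      pose proof (Hphit_rng ((M+1)*z)).
      assert (HD : 0 < 1 - phit ((M + 1) * z)) by lra.
      assert (HD2 : 1 - phit ((M + 1) * z) < 1 - phi z) by lra.
      set (D := 1 - phit ((M + 1) * z)) in *.
      set (q := (1 - phi z) / D) in *.
      assert (q * D = 1 - phi z) by (unfold q; field; lra).
      assert (1 < q) by nra.
      unfold Rabs in HN. destruct (Rcase_abs (q - 0)); lra. }
    destruct HZ as [Z [HZc HZM]]. exists Z. intros z Hz.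
    assert (Hsz : M <= s z) by (pose proof (HA Z z ltac:(lra)); lra).
    set (w := h z).
    assert (Hwz0 : z0 < w) by (pose proof (Hh_inc c z ltac:(lra)); unfold w; lra).
    assert (Hdw := Hw_pos w Hwz0).
    assert (Hkey : Derive phit w * M <= Derive phi z).
    { apply Rnot_lt_le; intro Hlt.
      set (eps := Derive phit w * M - Derive phi z).
      assert (Heps : 0 < eps) by (unfold eps; lra).
      pose proof (Derive_correct phi z (Hphi_der z)) as Hd.
      apply is_derive_Reals in Hd.
      destruct (Hd eps Heps) as [delta Hdel].
      set (t := Rmin (delta/2) ((z - c)/2)).
      assert (Ht : 0 < t /\ t < delta /\ t < z - c).
      { unfold t. pose proof (cond_pos delta).
        pose proof (Rmin_l (delta/2) ((z-c)/2)).
        pose proof (Rmin_r (delta/2) ((z-c)/2)).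
        assert (0 < Rmin (delta/2) ((z-c)/2)) by (apply Rmin_glb_lt; lra). lra. }
      destruct Ht as [Ht0 [Htd Htc]].
      specialize (Hdel (- t) ltac:(lra)).
      assert (Rabs (- t) < delta) by (rewrite Rabs_Ropp, Rabs_pos_eq; lra).
      specialize (Hdel H).
      set (x := z - t).
      replace (z + - t) with x in Hdel by (unfold x; ring).
      set (Q := (phi z - phi x) / t).
      replace ((phi x - phi z) / - t) with Q in Hdel by (unfold Q; field; lra).
      assert (HQ : Q < Derive phi z + eps).
      { unfold Rabs in Hdel. destruct (Rcase_abs (Q - Derive phi z)); lra. }
      assert (HQt : Q * t = phi z - phi x) by (unfold Q; field; lra).
      set (y := h x).
      assert (Hy0 : z0 < y) by (pose proof (Hh_le c x ltac:(unfold x; lra)); unfold y; lra).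
      assert (Hyw : y < w) by (apply Hh_inc; unfold x; lra).
      destruct (mvt phit y w Hphit_der Hyw) as [xi [Hxi Hm]].
      assert (Hm' : phit w - phit y = phi z - phi x) by (unfold w, y; rewrite !Hid; ring).
      assert (Hdxi : Derive phit w <= Derive phit xi) by (apply Hw_ni; lra).
      assert (HBx : s z * (z - x) <= w - y) by (apply HB; unfold x; lra).
      replace (z - x) with t in HBx by (unfold x; ring).
      assert (M * t <= w - y) by nra.
      assert (Derive phit w * (M * t) <= Derive phit xi * (w - y)) by nra.
      unfold eps in HQ. nra. }
    apply (Rmult_le_reg_r (Derive phit w)); auto.
    replace (Derive phi z / Derive phit w * Derive phit w) with (Derive phi z)
      by (field; lra). lra. }
  intros P [K HK].
  destruct (Hmain (Rmax K 0 + 1)) as [Z HZ].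
  { pose proof (Rmax_r K 0); lra. }
  assert (He : 0 < 1 - phi (Z + 1)) by (pose proof (Hphi_rng (Z+1)); lra).
  exists (mkposreal _ He). intros y Hy Hy1.
  unfold ball in Hy; simpl in Hy; unfold AbsRing_ball, abs, minus, plus, opp in Hy; simpl in Hy.
  assert (Hy2 : phi (Z + 1) < y).
  { apply Rabs_def2 in Hy. lra. }
  assert (Hy01 : 0 < y < 1) by (pose proof (Hphi_rng (Z+1)); lra).
  set (z := phiinv y).
  assert (Hpz : phi z = y) by (apply Hphi_inv; auto).
  assert (HzZ : Z < z).
  { apply Rnot_le_lt; intro H.
    assert (phi z <= phi (Z + 1)) by (apply Hphi_le; lra). lra. }
  apply HK. unfold gate_g. fold z.
  assert (Hhz : h z = phitinv y) by (unfold h; rewrite Hpz; reflexivity).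
  rewrite <- Hhz.
  pose proof (HZ z HzZ). pose proof (Rmax_l K 0). lra.
Qed.
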